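(* Let $\alpha\in(\tfrac12,1)$, $x'\in\mathbb{R}^d$, and let $f:\mathbb{R}^d\to\mathbb{R}$ be differentiable with $\nabla f$ $\alpha$-Hölder continuous. Then $$\sup_{r>0}\frac{1}{r^{2\alpha}}\inf_{B,b}\big\|\nabla f-B_{x'}\big\|_{B_r(x')}\le C\sup_{l>0}\frac{1}{l^{2\alpha}}\sup_{|y|\le l}\inf_{k\in\mathbb{R}^d}\big\|\nabla\delta_yf-k\big\|_{B_l(x')},$$ where the infimum on the left is over symmetric $B\in\mathbb{R}^{d\times d}$ and $b\in\mathbb{R}^d$, $B_{x'}(x):=B(x-x')+b$, and $C$ depends only on $d$ and $\alpha$.
   Context: $\delta_yf(x):=f(x+y)-f(x)$ (applied entrywise to vector fields). $\|\cdot\|_{B_r(x')}$ denotes the supremum norm over the ball $B_r(x')$ (for vector-valued functions, of the Euclidean norm). *)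

(* Defs.v *)
From HB Require Import structures.
From mathcomp Require Import all_boot all_order all_algebra.
From mathcomp Require Import all_classical all_reals all_analysis.
Set Implicit Arguments. Unset Strict Implicit. Unset Printing Implicit Defensive.
Import Order.TTheory GRing.Theory Num.Theory.
Import numFieldNormedType.Exports.
Local Open Scope classical_set_scope.
Local Open Scope ring_scope.

Definition enorm {R : realType} {d : nat} (v : 'rV[R]_d) : R :=
  Num.sqrt (\sum_(i < d) v 0 i ^+ 2).

Definition grad {R : realType} {d : nat} (f : 'rV[R]_d -> R) (x : 'rV[R]_d)
  : 'rV[R]_d := \row_(i < d) ('d f x (delta_mx 0 i : 'rV[R]_d)).

Definition fdelta {R : realType} {d : nat} (y : 'rV[R]_d) (f : 'rV[R]_d -> R)
  : 'rV[R]_d -> R := fun x => f (x + y) - f x.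

Definition ball_supnorm {R : realType} {d : nat} (F : 'rV[R]_d -> 'rV[R]_d)
  (x' : 'rV[R]_d) (r : R) : \bar R :=
  ereal_sup [set (enorm (F x))%:E | x in [set x | enorm (x - x') < r]].

Definition grad_holder {R : realType} {d : nat} (alpha : R) (f : 'rV[R]_d -> R) :=
  exists M : R, forall x y : 'rV[R]_d,
    enorm (grad f x - grad f y) <= M * powR (enorm (x - y)) alpha.

Definition lhs_quantity {R : realType} {d : nat} (alpha : R)
  (f : 'rV[R]_d -> R) (x' : 'rV[R]_d) : \bar R :=
  ereal_sup ((fun r : R => ((powR r (2 * alpha))^-1)%:E *
     ereal_inf ((fun Bb : 'M[R]_d * 'rV[R]_d =>
                   ball_supnorm (fun x => (grad f x - ((x - x') *m Bb.1^T + Bb.2))%R) x' r)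
               @` [set Bb : 'M[R]_d * 'rV[R]_d | (Bb.1^T = Bb.1)%R]))%E
   @` [set r : R | (0 < r)%R]).

Definition rhs_quantity {R : realType} {d : nat} (alpha : R)
  (f : 'rV[R]_d -> R) (x' : 'rV[R]_d) : \bar R :=
  ereal_sup ((fun l : R => ((powR l (2 * alpha))^-1)%:E *
     ereal_sup ((fun y : 'rV[R]_d =>
        ereal_inf ((fun k : 'rV[R]_d =>
                      ball_supnorm (fun x => (grad (fdelta y f) x - k)%R) x' l)
                   @` [set: 'rV[R]_d]))
        @` [set y : 'rV[R]_d | (enorm y <= l)%R]))%E
   @` [set l : R | (0 < l)%R]).

(* Main.v *)
Require Import Defs.
From HB Require Import structures.
From mathcomp Require Import all_boot all_order all_algebra.
From mathcomp Require Import all_classical all_reals all_analysis.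
From mathcomp Require Import ring lra.
Import Order.TTheory GRing.Theory Num.Theory.
Import numFieldNormedType.Exports.
Local Open Scope classical_set_scope.
Local Open Scope ring_scope.
Set Implicit Arguments. Unset Strict Implicit. Unset Printing Implicit Defensive.
Section Basic.
Variable R : realType.
Variable d : nat.
Implicit Types (v w : 'rV[R]_d).

Lemma enorm_ge0 v : 0 <= enorm v.
Proof. exact: sqrtr_ge0. Qed.

Lemma coord_le v i : `|v 0 i| <= enorm v.
Proof.
rewrite /enorm -sqrtr_sqr ler_sqrt; last by apply: sumr_ge0 => k _; exact: sqr_ge0.
rewrite (bigD1 i) //= lerDl; apply: sumr_ge0 => k _; exact: sqr_ge0.
Qed.

Definition l1 v := \sum_(k < d) `|v 0 k|.

Lemma enorm_l1 v : enorm v <= l1 v.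
Proof.
rewrite /enorm /l1 -(ger0_norm (sumr_ge0 _ (fun k _ => normr_ge0 (v 0 k)))).
rewrite -sqrtr_sqr ler_sqrt; last exact: sqr_ge0.
rewrite expr2 mulr_suml; apply: ler_sum => k _.
rewrite -(real_normK (num_real (v 0 k))) expr2 ler_wpM2l //.
rewrite (bigD1 k) //= lerDl; apply: sumr_ge0 => j _; exact: normr_ge0.
Qed.

Lemma l1D v w : l1 (v + w) <= l1 v + l1 w.
Proof.
rewrite /l1 -big_split /=; apply: ler_sum => k _; rewrite mxE; exact: ler_normD.
Qed.

Lemma l1Z c v : l1 (c *: v) = `|c| * l1 v.
Proof. rewrite /l1 mulr_sumr; apply: eq_bigr => k _; by rewrite mxE normrM. Qed.

Lemma l1_delta i : l1 (delta_mx 0 i) = 1.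
Proof.
rewrite /l1 (bigD1 i) //= big1 ?addr0.
  by rewrite mxE !eqxx normr1.
by move=> k /negbTE ki; rewrite mxE ki andbF normr0.
Qed.

Lemma enormZ c v : enorm (c *: v) = `|c| * enorm v.
Proof.
rewrite /enorm -sqrtr_sqr -sqrtrM ?sqr_ge0 //; congr Num.sqrt.
by rewrite mulr_sumr; apply: eq_bigr => k _; rewrite mxE exprMn.
Qed.

Lemma enorm0 : enorm (0 : 'rV[R]_d) = 0.
Proof. by rewrite -(scale0r (0 : 'rV[R]_d)) enormZ normr0 mul0r. Qed.

Lemma enorm_eq0 v : enorm v = 0 -> v = 0.
Proof.
move=> /eqP; rewrite /enorm sqrtr_eq0 => H.
have H0 : \sum_(k < d) v 0 k ^+ 2 = 0.
  by apply/eqP; rewrite eq_le H sumr_ge0 // => k _; exact: sqr_ge0.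
apply/rowP => k; rewrite mxE.
have := psumr_eq0P (fun k _ => sqr_ge0 (v 0 k)) H0 => /(_ k isT).
by move/eqP; rewrite sqrf_eq0 => /eqP.
Qed.

Lemma enorm_coord_bound v c : (forall i, `|v 0 i| <= c) -> enorm v <= d%:R * c.
Proof.
move=> H; apply: (le_trans (enorm_l1 v)); rewrite /l1.
apply: (le_trans (ler_sum _ (fun k _ => H k))).
by rewrite sumr_const card_ord mulr_natl.
Qed.

End Basic.
Section Seq.
Variable R : realType.

Lemma small_geom (a E q : R) : 0 <= q < 1 ->
  (forall n, `|a| <= E * q ^+ n) -> a = 0.
Proof.
move=> /andP[q0 q1] H; apply/eqP; apply/negPn/negP => a0.
have na : 0 < `|a| by rewrite normr_gt0.
have E0 : 0 < `|E| + 1 by rewrite ltr_pwDr ?normr_ge0.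
have cq : (fun n => q ^+ n) @ \oo --> (0 : R).
  by apply: cvg_expr; rewrite ger0_norm.
have := cvgr0_norm_lt _ cq _ (divr_gt0 na E0).
move=> [N _ HN]; have {}HN := HN N (leqnn N); move: HN => /=.
rewrite ger0_norm ?exprn_ge0 // => HN.
have := H N; have : E * q ^+ N <= `|E| * q ^+ N.
  by rewrite ler_wpM2r ?exprn_ge0 // ler_norm.
have : `|E| * q ^+ N <= `|E| * (`|a| / (`|E| + 1)).
  by rewrite ler_wpM2l ?normr_ge0 // ltW.
have : `|E| * (`|a| / (`|E| + 1)) < `|a|.
  rewrite mulrA ltr_pdivrMr //; nra.
lra.
Qed.

Lemma geom_lim (u : nat -> R) (c q : R) : 0 <= c -> 0 <= q -> q < 1 ->
  (forall n, `|u n.+1 - u n| <= c * q ^+ n) ->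
  exists a, forall n, `|a - u n| <= c * q ^+ n / (1 - q).
Proof.
move=> c0 q0 q1 H.
pose e n := c * q ^+ n / (1 - q).
have q1' : 0 < 1 - q by rewrite subr_gt0.
have e0 n : 0 <= e n by rewrite /e divr_ge0 ?mulr_ge0 ?exprn_ge0 // ltW.
have eS n : e n - e n.+1 = c * q ^+ n.
  rewrite /e exprS; field; lra.
have G n k : `|u (n + k)%N - u n| <= e n - e (n + k)%N.
  elim: k => [|k IH]; [by rewrite addn0 !subrr normr0|].
  rewrite addnS.
  have := ler_normD (u (n + k).+1 - u (n + k)%N) (u (n + k)%N - u n).
  rewrite addrA subrK => h; apply: (le_trans h).
  have := H (n + k)%N; have := eS (n + k)%N; lra.
pose v n := u n - e n.
have ub m n : v m <= u n + e n.
  rewrite /v; case: (leqP n m) => [/subnKC <-|/ltnW /subnKC <-].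
    have := G n (m - n)%N; rewrite ler_norml => /andP[_ h].
    have := e0 (n + (m - n))%N; lra.
  have := G m (n - m)%N; rewrite ler_norml => /andP[h _].
  have := e0 (m + (n - m))%N; have := e0 m; lra.
have hs : has_sup (range v).
  split; first by exists (v 0%N); exists 0%N.
  by exists (u 0%N + e 0%N) => _ [m _ <-]; exact: ub.
exists (sup (range v)) => n; rewrite ler_norml; apply/andP; split.
  have : v n <= sup (range v) by apply: sup_upper_bound => //; exists n.
  rewrite /v -/(e n); lra.
have : sup (range v) <= u n + e n.
  by apply: ge_sup; [exists (v 0%N); exists 0%N | move=> _ [m _ <-]; exact: ub].
rewrite -/(e n); lra.
Qed.

Lemma powR_expr (a r : R) n : 0 <= a -> powR (a ^+ n) r = (powR a r) ^+ n.
Proof.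
move=> a0; elim: n => [|n IH]; first by rewrite !expr0 powR1.
by rewrite !exprS powRM ?exprn_ge0 // IH.
Qed.

Definition qa (alpha : R) := 2 * powR 2^-1 (2 * alpha).

Lemma qa_ge0 alpha : 0 <= qa alpha.
Proof. by rewrite /qa mulr_ge0 ?powR_ge0. Qed.

Lemma qa_lt1 alpha : 2^-1 < alpha -> qa alpha < 1.
Proof.
move=> ha.
have l0 : ln (2^-1 : R) < 0.
  by rewrite ln_lt0 // invr_gt0 /= ?ltr0n // invf_lt1 ?ltr1n.
have h : powR (2^-1 : R) (2 * alpha) < 2^-1.
  rewrite /powR ifF; last by apply/negbTE; rewrite invr_neq0 // pnatr_eq0.
  rewrite -[X in _ < X]lnK ?posrE ?invr_gt0 ?ltr0n // ltr_expR; nra.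
rewrite /qa; lra.
Qed.

End Seq.
Section Core.
Variable R : realType.
Variable d : nat.

Lemma core (phi : 'rV[R]_d -> R) (alpha M H : R) :
  2^-1 < alpha < 1 -> 0 <= M -> 0 <= H -> phi 0 = 0 ->
  (forall x, `|phi x| <= H * powR (enorm x) alpha) ->
  (forall l x y, 0 < l -> enorm x < l -> enorm y <= l ->
     `|phi (x + y) - phi x - phi y| <= M * powR l (2 * alpha)) ->
  exists a : 'rV[R]_d, forall x,
    `|phi x - \sum_(j < d) x 0 j * a 0 j| <=
      M / (1 - qa alpha) * powR (enorm x) (2 * alpha).
Proof.
move=> /andP[a1 a2] M0 H0 phi0 Hh Hadd.
have q0 := qa_ge0 alpha; have q1 := qa_lt1 a1.
set q := qa alpha in q0 q1 *.
have q1' : 0 < 1 - q by rewrite subr_gt0.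
have al0 : 0 <= alpha by lra.
have al20 : 0 <= 2 * alpha by lra.
pose rho t := powR t (2 * alpha).
have rho0 t : 0 <= rho t by exact: powR_ge0.
pose h : R := 2^-1.
have h0 : 0 < h by rewrite /h invr_gt0 ltr0n.
have hh : h + h = 1 by rewrite /h; lra.
pose psi n x := 2 ^+ n * phi (h ^+ n *: x).
have hq n : 2 ^+ n * rho (h ^+ n) = q ^+ n.
  by rewrite /rho powR_expr ?(ltW h0) // -exprMn.
have rhoM a b : 0 <= a -> 0 <= b -> rho (a * b) = rho a * rho b.
  by move=> ? ?; rewrite /rho powRM.
have enx (x : 'rV[R]_d) : 0 <= enorm x := enorm_ge0 x.
have step x n : `|psi n.+1 x - psi n x| <= M * rho (enorm x) * q ^+ n.
  case: (eqVneq x 0) => [->|x0].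
    rewrite /psi !scaler0 phi0 !mulr0 subrr normr0.
    by rewrite mulr_ge0 ?exprn_ge0 ?mulr_ge0.
  rewrite /psi.
  set z := h ^+ n.+1 *: x.
  have zz : h ^+ n *: x = z + z.
    by rewrite /z -scalerDl exprS -mulrDl hh mul1r.
  rewrite zz exprS.
  have -> : 2 * 2 ^+ n * phi z - 2 ^+ n * phi (z + z) =
            - (2 ^+ n * (phi (z + z) - phi z - phi z)) by ring.
  rewrite normrN normrM (ger0_norm (exprn_ge0 _ _)) //.
  have ex : 0 < enorm x.
    rewrite lt_neqAle enx andbT eq_sym; apply/eqP => /enorm_eq0 h1.
    by move: x0; rewrite h1 eqxx.
  have ez : 2 * enorm z = h ^+ n * enorm x.
    rewrite /z enormZ ger0_norm ?exprn_ge0 ?(ltW h0) // exprS.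
    by rewrite /h; field.
  have ez0 : 0 < enorm z.
    have : 0 < h ^+ n * enorm x by rewrite mulr_gt0 ?exprn_gt0.
    lra.
  have := Hadd (2 * enorm z) z z _ _ _.
  rewrite -/(rho _) ez rhoM ?exprn_ge0 ?(ltW h0) ?enx // => /(_ _ _ _) H1.
  have {H1} H1 := H1 ltac:(lra) ltac:(lra) ltac:(lra).
  apply: (le_trans (ler_wpM2l (exprn_ge0 _ _) H1)) => //.
  rewrite -hq le_eqVlt; apply/orP; left; apply/eqP; ring.
have : forall x, exists a, forall n, `|a - psi n x| <= M * rho (enorm x) * q ^+ n / (1 - q).
  move=> x; apply: (geom_lim (u := fun n => psi n x)) => //.
  by rewrite mulr_ge0.
move=> /boolp.choice [A HA].
have psi0 x : psi 0%N x = phi x by rewrite /psi !expr0 mul1r scale1r.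
have HA0 x : `|A x - phi x| <= M * rho (enorm x) / (1 - q).
  by have := HA x 0%N; rewrite psi0 expr0 mulr1.
have Aadd x y : A (x + y) = A x + A y.
  pose L := enorm x + enorm y + 1.
  have L0 : 0 < L by rewrite /L; have := enx x; have := enx y; lra.
  pose E := (M * rho (enorm (x + y)) + M * rho (enorm x) + M * rho (enorm y)) / (1 - q)
            + M * rho L.
  suff : A (x + y) - A x - A y = 0 by lra.
  apply: (@small_geom _ _ E q); first by rewrite q0 q1.
  move=> n.
  have t1 := HA (x + y) n; have t2 := HA x n; have t3 := HA y n.
  have t4 : `|psi n (x + y) - psi n x - psi n y| <= M * rho L * q ^+ n.
    rewrite /psi scalerDr.
    set X := h ^+ n *: x; set Y := h ^+ n *: y.
    have -> : 2 ^+ n * phi (X + Y) - 2 ^+ n * phi X - 2 ^+ n * phi Y =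
              2 ^+ n * (phi (X + Y) - phi X - phi Y) by ring.
    rewrite normrM (ger0_norm (exprn_ge0 _ _)) //.
    have hn : 0 < h ^+ n by rewrite exprn_gt0.
    have := Hadd (h ^+ n * L) X Y.
    rewrite /X /Y !enormZ (ger0_norm (ltW hn)) -/(rho _).
    rewrite rhoM ?(ltW hn) ?(ltW L0) // => H1.
    have {H1} H1 : `|phi (X + Y) - phi X - phi Y| <= M * (rho (h ^+ n) * rho L).
      apply: H1; first by rewrite mulr_gt0.
        by rewrite ltr_pM2l // /L; have := enx y; lra.
      by rewrite ler_pM2l // /L; have := enx x; lra.
    apply: (le_trans (ler_wpM2l (exprn_ge0 _ _) H1)) => //.
    by rewrite -hq le_eqVlt; apply/orP; left; apply/eqP; ring.
  have -> : E * q ^+ n = M * rho (enorm (x + y)) * q ^+ n / (1 - q) +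
     M * rho (enorm x) * q ^+ n / (1 - q) + M * rho (enorm y) * q ^+ n / (1 - q) +
     M * rho L * q ^+ n.
    by rewrite /E; field; lra.
  move: t1 t2 t3 t4; rewrite !ler_norml.
  set b1 := M * rho (enorm (x + y)) * q ^+ n / (1 - q).
  set b2 := M * rho (enorm x) * q ^+ n / (1 - q).
  set b3 := M * rho (enorm y) * q ^+ n / (1 - q).
  set b4 := M * rho L * q ^+ n.
  lra.
have A0 : A 0 = 0 by have := Aadd 0 0; rewrite addr0; lra.
have AN x : A (- x) = - A x by have := Aadd x (- x); rewrite addrN A0; lra.
have rhomono a b : 0 <= a <= b -> rho a <= rho b.
  by move=> /andP[a0 ab]; apply: ge0_ler_powR => //; rewrite nnegrE // (le_trans a0).
have pmono a b : 0 <= a <= b -> powR a alpha <= powR b alpha.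
  by move=> /andP[a0 ab]; apply: ge0_ler_powR => //; rewrite nnegrE // (le_trans a0).
have Abound x t : 0 <= t <= 1 ->
    `|A (t *: x)| <= H * powR (enorm x) alpha + M * rho (enorm x) / (1 - q).
  move=> /andP[t0 t1].
  have et : enorm (t *: x) <= enorm x.
    by rewrite enormZ ger0_norm // ler_piMl ?enx.
  have et0 : 0 <= enorm (t *: x) := enx _.
  have u1 := HA0 (t *: x); have u2 := Hh (t *: x).
  have u3 : M * rho (enorm (t *: x)) / (1 - q) <= M * rho (enorm x) / (1 - q).
    by rewrite ler_pM2r ?invr_gt0 // ler_wpM2l // rhomono // et0.
  have u4 : H * powR (enorm (t *: x)) alpha <= H * powR (enorm x) alpha.
    by rewrite ler_wpM2l // pmono // et0.
  move: u1 u2; rewrite !ler_norml => u1 u2; apply/andP; split; lra.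
have homog x t : A (t *: x) = t * A x.
  pose D s := A (s *: x) - s * A x.
  have Dadd s u : D (s + u) = D s + D u.
    by rewrite /D scalerDl Aadd mulrDl; lra.
  have D1 : D 1 = 0 by rewrite /D scale1r mul1r subrr.
  have D0 : D 0 = 0 by rewrite /D scale0r A0 mul0r subrr.
  pose c0 := H * powR (enorm x) alpha + M * rho (enorm x) / (1 - q) + `|A x|.
  have Db s : 0 <= s <= 1 -> `|D s| <= c0.
    move=> /andP[s0 s1]; rewrite /D /c0.
    apply: (le_trans (ler_normB _ _)); rewrite normrM (ger0_norm s0).
    have := Abound x s; rewrite s0 s1 => /(_ isT) u1.
    have : s * `|A x| <= `|A x| by rewrite ler_piMl.
    lra.
  have Dk k : forall s, 0 <= s <= k%:R -> `|D s| <= c0.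
    elim: k => [|k IH] s /andP[s0 sk].
      by apply: Db; rewrite s0 (le_trans sk) ?ler0n.
    case: (lerP s 1) => s1; first by apply: Db; rewrite s0 s1.
    have -> : s = (s - 1) + 1 by ring.
    rewrite Dadd D1 addr0; apply: IH.
    rewrite -natr1 in sk; apply/andP; split; lra.
  have Dpos s : 0 <= s -> `|D s| <= c0.
    move=> s0; apply: (Dk (Num.Def.archi_bound s)).
    by rewrite s0 ltW // archi_boundP.
  have Dn n s : D (n%:R * s) = n%:R * D s.
    elim: n => [|n IH]; first by rewrite !mul0r D0.
    by rewrite -natr1 !mulrDl !mul1r Dadd IH.
  have Dz s : 0 <= s -> D s = 0.
    move=> s0; apply/eqP; apply/negPn/negP => Ds.
    have Dp : 0 < `|D s| by rewrite normr_gt0.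
    have c00 : 0 <= c0 by have := Dpos s s0; have := normr_ge0 (D s); lra.
    pose n := Num.Def.archi_bound (c0 / `|D s|).
    have hn : c0 / `|D s| < n%:R by apply: archi_boundP; rewrite divr_ge0.
    have := Dpos (n%:R * s) (mulr_ge0 (ler0n _ _) s0).
    rewrite Dn normrM ger0_norm ?ler0n // => hh2.
    move: hn; rewrite ltr_pdivrMr // => hn; lra.
  have : D t = 0.
    case: (lerP 0 t) => t0; first exact: Dz.
    have := Dadd t (- t); rewrite addrN D0 (Dz (- t)); last by rewrite oppr_ge0 ltW.
    lra.
  by rewrite /D; lra.
have Alin x : A x = \sum_(j < d) x 0 j * A (delta_mx 0 j).
  rewrite {1}(row_sum_delta x) (big_morph A Aadd A0).
  by apply: eq_bigr => j _; rewrite homog.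
exists (\row_j A (delta_mx 0 j)) => x.
have -> : \sum_(j < d) x 0 j * (\row_j A (delta_mx 0 j)) 0 j = A x.
  by rewrite Alin; apply: eq_bigr => j _; rewrite mxE.
rewrite distrC; apply: (le_trans (HA0 x)).
by rewrite le_eqVlt; apply/orP; left; apply/eqP; rewrite /rho; field; lra.
Qed.
End Core.
Section Der.
Variable R : realType.
Variable d : nat.

Lemma derive_shiftr (f : 'rV[R]_d -> R) y x v :
  'D_v (fun z => f (z + y)) x = 'D_v f (x + y).
Proof.
rewrite /derive; congr lim.
have -> : (fun h : R => h^-1 *: (((fun z => f (z + y)) \o shift x) (h *: v) - f (x + y)))
   = (fun h : R => h^-1 *: ((f \o shift (x + y)) (h *: v) - f (x + y))).
  by apply: funext => h /=; rewrite /shift addrA.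
by [].
Qed.

Lemma derivable_shiftr (f : 'rV[R]_d -> R) y x v :
  derivable f (x + y) v -> derivable (fun z => f (z + y)) x v.
Proof.
rewrite /derivable.
have -> : (fun h : R => h^-1 *: (((fun z => f (z + y)) \o shift x) (h *: v) - f (x + y)))
   = (fun h : R => h^-1 *: ((f \o shift (x + y)) (h *: v) - f (x + y))).
  by apply: funext => h /=; rewrite /shift addrA.
by [].
Qed.

Lemma grad_fdelta (f : 'rV[R]_d -> R) y x :
  (forall x, differentiable f x) ->
  grad (fdelta y f) x = grad f (x + y) - grad f x.
Proof.
move=> df.
have dsh : differentiable (fun z => f (z + y)) x.
  have h1 : differentiable (fun z : 'rV[R]_d => z + y) x.
    have -> : (fun z : 'rV[R]_d => z + y) = (id \+ cst y) by [].
    apply: differentiableD; last exact: differentiable_cst.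
    by have := is_diff_id x; case.
  exact: (differentiable_comp h1 (df _)).
have E : fdelta y f = (fun z => f (z + y)) \- f by [].
have dfd : differentiable (fdelta y f) x.
  rewrite E; exact: (differentiableB dsh (df x)).
apply/rowP => i; rewrite !mxE.
have e1 := deriveE (delta_mx 0 i) dfd.
have e2 := deriveE (delta_mx 0 i) (df (x + y)).
have e3 := deriveE (delta_mx 0 i) (df x).
apply: etrans (esym e1) _; apply: etrans _ (f_equal2 (fun a b => a - b) e2 e3).
have h1 := derivable_shiftr (diff_derivable (v := delta_mx 0 i) (df (x + y))).
have h2 := diff_derivable (v := delta_mx 0 i) (df x).
have e4 := deriveB h1 h2.
have e5 := derive_shiftr f y x (delta_mx 0 i).
exact: etrans e4 (f_equal2 (fun a b => a - b) e5 erefl).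
Qed.
Lemma derive_line (f : 'rV[R]_d -> R) p u (t : R) :
  'D_1 (fun s : R => f (p + s *: u)) t = 'D_u f (p + t *: u).
Proof.
rewrite /derive; congr lim.
have -> : (fun h : R => h^-1 *: (((fun s : R => f (p + s *: u)) \o shift t) (h *: 1) - f (p + t *: u)))
   = (fun h : R => h^-1 *: ((f \o shift (p + t *: u)) (h *: u) - f (p + t *: u))).
  apply: funext => h /=; rewrite /shift; congr (_ *: (f _ - _)).
  by rewrite scalerDl addrC -addrA [t *: u + _]addrC /GRing.scale /= mulr1.
by [].
Qed.

Lemma derivable_line (f : 'rV[R]_d -> R) p u (t : R) :
  derivable f (p + t *: u) u -> derivable (fun s : R => f (p + s *: u)) t 1.
Proof.
rewrite /derivable.
have -> : (fun h : R => h^-1 *: (((fun s : R => f (p + s *: u)) \o shift t) (h *: 1) - f (p + t *: u)))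
   = (fun h : R => h^-1 *: ((f \o shift (p + t *: u)) (h *: u) - f (p + t *: u))).
  apply: funext => h /=; rewrite /shift; congr (_ *: (f _ - _)).
  by rewrite scalerDl addrC -addrA [t *: u + _]addrC /GRing.scale /= mulr1.
by [].
Qed.

End Der.
Section Sym.
Variable R : realType.
Variable d : nat.

Lemma alg4 (g1 g2 g0 m2 sB k1 k2 k3 : R) :
  `|g1 - g0 - (m2 + sB)| <= k1 -> `|g2 - g0 - m2| <= k2 -> k1 <= k3 -> k2 <= k3 ->
  `|g1 - g2 - sB| <= 2 * k3.
Proof.
rewrite !ler_norml => /andP[? ?] /andP[? ?] ? ?; apply/andP; split; lra.
Qed.

Lemma line_is_derive (f : 'rV[R]_d -> R) p u (t : R) :
  differentiable f (p + t *: u) ->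
  is_derive t 1 (fun s : R => f (p + s *: u)) ('d f (p + t *: u) u).
Proof.
move=> df.
have h := derivableP (derivable_line (diff_derivable (v := u) df)).
have e1 := derive_line f p u t.
have e2 := deriveE u df.
by rewrite -e2 -e1.
Qed.

Lemma line_is_derive_grad (f : 'rV[R]_d -> R) p (i : 'I_d) (t : R) :
  differentiable f (p + t *: delta_mx 0 i) ->
  is_derive t 1 (fun s : R => f (p + s *: delta_mx 0 i)) (grad f (p + t *: delta_mx 0 i) 0 i).
Proof. by move=> df; rewrite /grad mxE; exact: line_is_derive. Qed.

Lemma mvt_step (f : 'rV[R]_d -> R) (x' : 'rV[R]_d) (B : 'M[R]_d) (K alpha : R)
  (i j : 'I_d) (s : R) :
  0 <= alpha -> 0 <= K -> 0 < s ->
  (forall x, differentiable f x) ->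
  (forall z, `|grad f (x' + z) 0 i - grad f x' 0 i - (z *m B^T) 0 i|
       <= K * powR (enorm z) (2 * alpha)) ->
  `|(f (x' + s *: delta_mx 0 j + s *: delta_mx 0 i) - f (x' + s *: delta_mx 0 i)
     - f (x' + s *: delta_mx 0 j) + f x') - s ^+ 2 * B i j|
    <= s * (2 * K * powR (2 * s) (2 * alpha)).
Proof.
move=> al0 K0 s0 df Hb.
set ei := delta_mx 0 i : 'rV[R]_d; set ej := delta_mx 0 j : 'rV[R]_d.
set p := x' + s *: ej.
pose F1 := fun t : R => f (p + t *: ei).
pose F2 := fun t : R => f (x' + t *: ei).
pose dG := fun t : R => grad f (p + t *: ei) 0 i - grad f (x' + t *: ei) 0 i.
have hd (t : R) : is_derive t (1 : R) (F1 - F2) (dG t).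
  apply: is_deriveB; exact: line_is_derive_grad.
have [c cI hc] := MVT (f := F1 - F2) (df := dG) s0 (fun t _ => hd t)
  (derivable_within_continuous (fun t _ => @ex_derive _ _ _ _ _ _ _ (hd t))).
move: cI; rewrite in_itv /= => /andP[c0 cs].
have e0 : (F1 - F2) s - (F1 - F2) 0 =
   f (x' + s *: ej + s *: ei) - f (x' + s *: ei) - f (x' + s *: ej) + f x'.
  have -> : (F1 - F2) s = F1 s - F2 s by [].
  have -> : (F1 - F2) 0 = F1 0 - F2 0 by [].
  rewrite /F1 /F2 !scale0r !addr0 /p; lra.
rewrite -e0 hc subr0.
set z2 := c *: ei; set z1 := s *: ej + z2.
have ez1 : p + c *: ei = x' + z1 by rewrite /p /z1 /z2 addrA.
have E1 : (z1 *m B^T) 0 i = (z2 *m B^T) 0 i + s * B i j.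
  rewrite /z1 mulmxDl mxE addrC; congr (_ + _).
  by rewrite -scalemxAl mxE /ej -rowE !mxE.
have al20 : 0 <= 2 * alpha by lra.
have rmono a b : 0 <= a <= b -> powR a (2 * alpha) <= powR b (2 * alpha).
  by move=> /andP[a0 ab]; apply: ge0_ler_powR => //; rewrite nnegrE // (le_trans a0).
have n1 : enorm z1 <= 2 * s.
  apply: (le_trans (enorm_l1 _)); apply: (le_trans (l1D _ _)).
  by rewrite !l1Z !l1_delta !mulr1 !ger0_norm //; [lra|lra|lra].
have n2 : enorm z2 <= 2 * s.
  apply: (le_trans (enorm_l1 _)).
  by rewrite !l1Z !l1_delta !mulr1 !ger0_norm //; [lra|lra].
have b1 := Hb z1; have b2 := Hb z2.
have r1 : K * powR (enorm z1) (2 * alpha) <= K * powR (2 * s) (2 * alpha).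
  by rewrite ler_wpM2l // rmono // enorm_ge0.
have r2 : K * powR (enorm z2) (2 * alpha) <= K * powR (2 * s) (2 * alpha).
  by rewrite ler_wpM2l // rmono // enorm_ge0.
have : `|dG c - s * B i j| <= 2 * (K * powR (2 * s) (2 * alpha)).
  rewrite /dG ez1; rewrite E1 in b1.
  exact: alg4 b1 b2 r1 r2.
move: (dG c) => D.
have -> : D * s - s ^+ 2 * B i j = s * (D - s * B i j) by ring.
rewrite normrM ger0_norm ?(ltW s0) // => hh.
by apply: ler_wpM2l; [exact: ltW | rewrite -mulrA].
Qed.
End Sym.
Section Sym2.
Variable R : realType.
Variable d : nat.

Lemma alg5 (a u v w p r T : R) :
  `|a - u - v + w - p| <= T -> `|a - v - u + w - r| <= T -> `|p - r| <= 2 * T.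
Proof.
rewrite !ler_norml => /andP[? ?] /andP[? ?]; apply/andP; split; lra.
Qed.

Lemma symB (f : 'rV[R]_d -> R) (x' : 'rV[R]_d) (B : 'M[R]_d) (K alpha : R) :
  2^-1 < alpha -> 0 <= K -> (forall x, differentiable f x) ->
  (forall i z, `|grad f (x' + z) 0 i - grad f x' 0 i - (z *m B^T) 0 i|
       <= K * powR (enorm z) (2 * alpha)) ->
  B^T = B.
Proof.
move=> ha K0 df Hb.
have al0 : 0 <= alpha by lra.
apply/matrixP => i j; rewrite mxE.
pose rho t := powR t (2 * alpha).
pose h : R := 2^-1.
have h0 : 0 < h by rewrite /h invr_gt0 ltr0n.
suff : B i j - B j i = 0 by lra.
apply: (@small_geom _ _ (4 * K * rho 2) (qa alpha)).
  by rewrite qa_ge0 qa_lt1.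
move=> n.
pose s := h ^+ n.
have s0 : 0 < s by rewrite exprn_gt0.
have m1 := mvt_step (i := i) j al0 K0 s0 df (Hb i).
have m2 := mvt_step (i := j) i al0 K0 s0 df (Hb j).
rewrite (addrAC x') in m2.
have m3 := alg5 m1 m2.
rewrite -mulrBr normrM ger0_norm ?exprn_ge0 ?(ltW s0) // in m3.
have m4 : s * `|B i j - B j i| <= 4 * K * rho (2 * s).
  rewrite -(ler_pM2l s0); move: m3; rewrite expr2 /rho => m3.
  rewrite mulrA; apply: (le_trans m3); rewrite le_eqVlt; apply/orP; left; apply/eqP; ring.
have e2s : rho (2 * s) = rho 2 * (powR h (2 * alpha)) ^+ n.
  by rewrite /rho powRM ?(ltW s0) // /s powR_expr // ltW.
have hs : 2 ^+ n * s = 1 by rewrite /s -exprMn /h mulfV ?pnatr_eq0 // expr1n.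
have : 2 ^+ n * (s * `|B i j - B j i|) <= 2 ^+ n * (4 * K * rho (2 * s)).
  by rewrite ler_wpM2l // exprn_ge0.
rewrite mulrA hs mul1r e2s /qa exprMn.
move=> m5; apply: (le_trans m5); rewrite le_eqVlt; apply/orP; left; apply/eqP; ring.
exact: ltW.
Qed.
End Sym2.
Section Main.
Variable R : realType.
Variable d : nat.

Lemma bsn_ge0 (F : 'rV[R]_d -> 'rV[R]_d) x' r : 0 < r -> (0 <= ball_supnorm F x' r)%E.
Proof.
move=> r0; apply: (@le_trans _ _ (enorm (F x'))%:E); first by rewrite lee_fin enorm_ge0.
by apply: ereal_sup_ubound; exists x' => //=; rewrite subrr enorm0.
Qed.

Lemma extract (alpha M l : R) (f : 'rV[R]_d -> R) x' y (eta : R) :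
  0 < l -> enorm y <= l -> 0 < eta ->
  (rhs_quantity alpha f x' <= M%:E)%E ->
  exists k, forall x, enorm (x - x') < l ->
    enorm (grad (fdelta y f) x - k) <= M * powR l (2 * alpha) + eta.
Proof.
move=> l0 yl e0 hR.
pose Sy := fun y : 'rV[R]_d => ereal_inf ((fun k : 'rV[R]_d =>
   ball_supnorm (fun x => (grad (fdelta y f) x - k)%R) x' l) @` [set: 'rV[R]_d]).
pose Sl := ereal_sup (Sy @` [set y : 'rV[R]_d | (enorm y <= l)%R]).
have h1 : (((powR l (2 * alpha))^-1)%:E * Sl <= M%:E)%E.
  by apply: le_trans hR; apply: ereal_sup_ubound; exists l.
have h2 : (Sy y <= Sl)%E by apply: ereal_sup_ubound; exists y.
have rl : 0 < powR l (2 * alpha) by rewrite powR_gt0.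
have h3 : (Sy y <= (M * powR l (2 * alpha))%:E)%E.
  have : (((powR l (2 * alpha))^-1)%:E * Sy y <= M%:E)%E.
    apply: le_trans h1; apply: lee_wpmul2l => //.
    by rewrite lee_fin invr_ge0 ltW.
  by rewrite lee_pdivrMl // -EFinM mulrC.
have h4 : (0 <= Sy y)%E.
  by apply: le_ereal_inf_tmp => _ [k _ <-]; exact: bsn_ge0.
have fin : Sy y \is a fin_num.
  by rewrite ge0_fin_numE // (le_lt_trans h3) ?ltry.
have [z [k _ <-] hz] := lb_ereal_inf_adherent e0 fin.
exists k => x hx.
have hh : ((enorm (grad (fdelta y f) x - k))%:E <=
   ball_supnorm (fun x => (grad (fdelta y f) x - k)%R) x' l)%E.
  by apply: ereal_sup_ubound; exists x.
have h5 : (Sy y + eta%:E <= (M * powR l (2 * alpha) + eta)%:E)%E.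
  by rewrite EFinD leeD2r.
have := le_lt_trans hh (lt_le_trans hz h5).
by rewrite lte_fin => /ltW.
Qed.

Lemma alg6 (a b c e k T r : R) :
  `|a - b - k| <= T + r / 2 -> `|c - e - k| <= T + r / 2 ->
  `|a - b - (c - e)| <= 2 * T + r.
Proof.
rewrite !ler_norml => /andP[? ?] /andP[? ?]; apply/andP; split; lra.
Qed.

Lemma coordB (A B : 'rV[R]_d) i : (A - B) 0 i = A 0 i - B 0 i.
Proof. by rewrite !mxE. Qed.

Lemma coordD (A B : 'rV[R]_d) i : (A + B) 0 i = A 0 i + B 0 i.
Proof. by rewrite !mxE. Qed.

Lemma alg7 (a b c e T : R) :
  `|a - b - (e - c)| <= T -> `|a - c - (b - c) - (e - c)| <= T.
Proof. by have -> : a - c - (b - c) - (e - c) = a - b - (e - c) by ring. Qed.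

Lemma key_bound (alpha M l : R) (f : 'rV[R]_d -> R) x' y x1 x2 (i : 'I_d) :
  (forall x, differentiable f x) ->
  0 < l -> enorm y <= l -> enorm (x1 - x') < l -> enorm (x2 - x') < l ->
  (rhs_quantity alpha f x' <= M%:E)%E ->
  `|grad f (x1 + y) 0 i - grad f x1 0 i - (grad f (x2 + y) 0 i - grad f x2 0 i)|
    <= 2 * (M * powR l (2 * alpha)).
Proof.
move=> df l0 yl h1 h2 hR.
apply/ler_addgt0Pr => e e0.
have e20 : 0 < e / 2 by rewrite divr_gt0.
have [k hk] := extract (eta := e / 2) l0 yl e20 hR.
have c1 := le_trans (coord_le _ i) (hk x1 h1).
have c2 := le_trans (coord_le _ i) (hk x2 h2).
rewrite (grad_fdelta y x1 df) !coordB in c1.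
rewrite (grad_fdelta y x2 df) !coordB in c2.
exact: alg6 c1 c2.
Qed.

End Main.
Unset Implicit Arguments.

Theorem proposition1 (R : realType) (d : nat) (alpha : R) :
  2^-1 < alpha < 1 ->
  exists C : R, 0 < C /\
    forall (x' : 'rV[R]_d) (f : 'rV[R]_d -> R),
      (forall x, differentiable f x) ->
      grad_holder alpha f ->
      (lhs_quantity alpha f x' <= C%:E * rhs_quantity alpha f x')%E.
Proof.
move=> ha; have /andP[a1 a2] := ha.
have q0 := qa_ge0 alpha; have q1 := qa_lt1 a1.
have q1' : 0 < 1 - qa alpha by rewrite subr_gt0.
pose C := (d%:R + 1) * (2 / (1 - qa alpha)).
have C0 : 0 < C by rewrite /C mulr_gt0 ?divr_gt0 // ltr_pwDr ?ler0n.
exists C; split => // x' f df [Mh Hh].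
have al0 : 0 <= alpha by lra.
have al20 : 0 <= 2 * alpha by lra.
have R0 : (0 <= rhs_quantity alpha f x')%E.
  apply: le_trans (_ : (((powR 1 (2 * alpha))^-1)%:E * 0 <= _)%E).
    by rewrite mule0.
  apply: le_trans (ereal_sup_ubound _); last by exists 1 => //=; exact: ltr01.
  apply: lee_wpmul2l; first by rewrite lee_fin invr_ge0 powR_ge0.
  apply: le_trans (ereal_sup_ubound _); last first.
    by exists 0; [rewrite /= enorm0 ler01 | reflexivity].
  apply: le_ereal_inf_tmp => _ [k _ <-]; exact: bsn_ge0.
case E: (rhs_quantity alpha f x') R0 => [M| |] // R0.
  have M0 : 0 <= M by rewrite -lee_fin.
  have hR : (rhs_quantity alpha f x' <= M%:E)%E by rewrite E.
  pose K := 2 / (1 - qa alpha) * M.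
  have K0 : 0 <= K by rewrite /K mulr_ge0 ?divr_ge0 // ltW.
  have Hcore : forall i : 'I_d, exists a : 'rV[R]_d, forall z,
      `|(grad f (x' + z) 0 i - grad f x' 0 i) - \sum_(j < d) z 0 j * a 0 j|
        <= 2 * M / (1 - qa alpha) * powR (enorm z) (2 * alpha).
    move=> i.
    apply: (@core _ _ (fun z => grad f (x' + z) 0 i - grad f x' 0 i) alpha (2 * M) `|Mh|).
    - exact: ha.
    - by rewrite mulr_ge0.
    - exact: normr_ge0.
    - by rewrite /= addr0 subrr.
    - move=> z /=; rewrite -coordB.
      apply: (le_trans (coord_le _ i)); apply: (le_trans (Hh (x' + z) x')).
      rewrite (addrC x') addrK.
      by rewrite ler_wpM2r ?powR_ge0 // ler_norm.
    - move=> l x y l0 hx hy /=.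
      have h1 : enorm (x' + x - x') < l by rewrite (addrC x') addrK.
      have h2 : enorm (x' - x') < l by rewrite subrr enorm0.
      have := key_bound i df l0 hy h1 h2 hR.
      rewrite addrA -mulrA; exact: alg7.
  move: Hcore => /boolp.choice [a Ha].
  pose B : 'M[R]_d := \matrix_(i, j) a i 0 j.
  have HB i z : `|grad f (x' + z) 0 i - grad f x' 0 i - (z *m B^T) 0 i|
                 <= K * powR (enorm z) (2 * alpha).
    have -> : (z *m B^T) 0 i = \sum_(j < d) z 0 j * a i 0 j.
      by rewrite mxE; apply: eq_bigr => j _; rewrite !mxE.
    have -> : K = 2 * M / (1 - qa alpha) by rewrite /K mulrAC.
    exact: Ha.
  have Bsym : B^T = B by apply: (symB a1 K0 df HB).
  rewrite /lhs_quantity; apply: ge_ereal_sup => _ [r r0 <-].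
  have rr : 0 < powR r (2 * alpha) by rewrite powR_gt0.
  have bs : (ball_supnorm (fun x => (grad f x - ((x - x') *m B^T + grad f x'))%R) x' r
              <= (d%:R * (K * powR r (2 * alpha)))%:E)%E.
    apply: ge_ereal_sup => _ [x hx <-]; rewrite lee_fin.
    apply: enorm_coord_bound => i.
    rewrite coordB coordD opprD addrA addrAC.
    have := HB i (x - x'); rewrite (addrC x') subrK => h.
    apply: (le_trans h); rewrite ler_wpM2l //.
    by apply: ge0_ler_powR => //; rewrite ?nnegrE ?enorm_ge0 ?ltW.
  have infl : (ereal_inf ((fun Bb : 'M[R]_d * 'rV[R]_d =>
         ball_supnorm (fun x => (grad f x - ((x - x') *m Bb.1^T + Bb.2))%R) x' r)
         @` [set Bb : 'M[R]_d * 'rV[R]_d | (Bb.1^T = Bb.1)%R])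
       <= (d%:R * (K * powR r (2 * alpha)))%:E)%E.
    apply: le_trans bs; apply: ereal_inf_lbound; by exists (B, grad f x').
  apply: le_trans (lee_wpmul2l _ infl) _; first by rewrite lee_fin invr_ge0 ltW.
  rewrite -!EFinM lee_fin.
  have -> : (powR r (2 * alpha))^-1 * (d%:R * (K * powR r (2 * alpha))) = d%:R * K.
    by field; rewrite gt_eqF.
  rewrite /C /K -[(d%:R + 1) * _ * M]mulrA; apply: ler_wpM2r.
    by rewrite mulr_ge0 ?divr_ge0 // ltW.
  by rewrite lerDl.
by rewrite gt0_muley ?lte_fin // leey.
Qed.
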